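(* For every integer $n\ge 1$, the sequence $(K_q(n,m))_{0\le m\le n}$ is strongly $q$-log-concave; that is, for all integers $1\le m\le l\le n-1$, the polynomial $K_q(n,m)K_q(n,l)-K_q(n,m-1)K_q(n,l+1)$ has nonnegative coefficients as a polynomial in $q$.
   Context: For integers $n\ge m\ge 0$ the Gaussian polynomial is ${n\brack m}=\prod_{i=0}^{m-1}\frac{1-q^{n-i}}{1-q^{m-i}}$. For $n\geq 1$ and $0\le m\le n$, the $q$-Kaplansky number is $K_q(n,m)=\frac{1-q^{n+m}}{1-q^{n}}{n\brack m}$ (a polynomial in $q$). A sequence of real polynomials $(f_k(q))$ is strongly $q$-log-concave if $f_a(q)f_b(q)-f_{a-1}(q)f_{b+1}(q)$ has nonnegative coefficients for all indices $b\ge a\ge 1$ (within the index range). *)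

(* Defs.v *)
From mathcomp Require Import all_boot all_order all_algebra.
Set Implicit Arguments. Unset Strict Implicit. Unset Printing Implicit Defensive.
Import Order.TTheory GRing.Theory Num.Theory.
Local Open Scope ring_scope.

(* The quotient is exact (the
   Gaussian polynomial is a polynomial), so we realise it as the
   Euclidean quotient in {poly rat}. *)
Definition gauss_poly (n m : nat) : {poly rat} :=
  (\prod_(i < m) (1 - 'X^(n - i))) %/ (\prod_(i < m) (1 - 'X^(m - i))).

(* q-Kaplansky number K_q(n,m) = (1 - q^(n+m)) / (1 - q^n) * [n brack m];
   again an exact quotient for n >= 1. *)
Definition qKaplansky (n m : nat) : {poly rat} :=
  ((1 - 'X^(n + m)) * gauss_poly n m) %/ (1 - 'X^n).

(* Main.v *)
Require Import Defs.
From mathcomp Require Import all_boot all_order all_algebra.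
From mathcomp Require Import ring zify.
Import Order.TTheory GRing.Theory Num.Theory.
Local Open Scope ring_scope.

Fixpoint G (n m : nat) : {poly rat} :=
  match n, m with
  | 0, 0 => 1
  | 0, _.+1 => 0
  | _.+1, 0 => 1
  | n'.+1, m'.+1 => G n' m' + 'X^(m'.+1) * G n' m'.+1
  end.

Lemma G_gt n m : (n < m)%N -> G n m = 0.
Proof.
elim: n m => [|n IH] [|m] //= H.
by rewrite !IH ?mulr0 ?addr0 // ltnW.
Qed.

Definition B (r s : nat) := G (r + s) r.

Lemma B0s s : B 0 s = 1.
Proof. by rewrite /B; case: s. Qed.

Lemma Br0 r : B r 0 = 1.
Proof.
rewrite /B addn0; elim: r => [|r IH] //=.
by rewrite IH G_gt // mulr0 addr0.
Qed.

Lemma Brec1 r s : B r.+1 s.+1 = B r s.+1 + 'X^(r.+1) * B r.+1 s.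
Proof. by rewrite /B addSn addnS. Qed.

Fixpoint Fr (n : nat) : {poly rat} :=
  if n is n'.+1 then Fr n' * (1 - 'X^(n'.+1)) else 1.

Lemma onemX_neq0 k : (1 - 'X^(k.+1) : {poly rat}) != 0.
Proof.
apply/negP=> /eqP H.
have := congr1 (fun p => p.[0]) H.
rewrite /= !hornerE expr0n /= subr0 => /eqP; by rewrite oner_eq0.
Qed.

Lemma Fr_neq0 n : Fr n != 0.
Proof.
elim: n => [|n IH] /=; first exact: oner_neq0.
by rewrite mulf_neq0 // onemX_neq0.
Qed.

Lemma Bclosed_aux n : forall r s, (r + s = n)%N -> B r s * (Fr r * Fr s) = Fr (r + s).
Proof.
elim: n => [|n IH] r s Hn.
  by case: r Hn => [|r] //; case: s => [|s] //= _; rewrite B0s !mulr1.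
case: r Hn => [|r] Hn; first by rewrite B0s mul1r [Fr 0]/= mul1r.
case: s Hn => [|s] Hn; first by rewrite Br0 mul1r [Fr 0]/= mulr1 addn0.
rewrite Brec1.
have H1 : (r + s.+1 = n)%N by lia.
have {}H1 := IH _ _ H1.
have H2 : (r.+1 + s = n)%N by lia.
have {}H2 := IH _ _ H2.
move: H1 H2; rewrite /=.
move=> H1 H2.
set a := B r s.+1 in H1 *; set b := B r.+1 s in H2 *.
set x := Fr r in H1 H2 *; set y := Fr s in H1 H2 *.
set z := Fr (r + s) in H1 H2 *.
have -> : (a + 'X^(r.+1) * b) * (x * (1 - 'X^(r.+1)) * (y * (1 - 'X^(s.+1)))) =
   (1 - 'X^(r.+1)) * (a * (x * (y * (1 - 'X^(s.+1))))) +
   'X^(r.+1) * (1 - 'X^(s.+1)) * (b * (x * (1 - 'X^(r.+1)) * y)) by ring.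
rewrite H1 H2 addnS /= -/z.
have E : 'X^((r + s).+2) = 'X^(r.+1) * 'X^(s.+1) :> {poly rat} by rewrite -exprD addSn addnS.
rewrite E; ring.
Qed.

Lemma Bclosed r s : B r s * (Fr r * Fr s) = Fr (r + s).
Proof. exact: (@Bclosed_aux (r + s)%N r s erefl). Qed.


Lemma Brec2 r s : B r.+1 s.+1 = B r.+1 s + 'X^(s.+1) * B r s.+1.
Proof.
apply: (mulIf (mulf_neq0 (Fr_neq0 r.+1) (Fr_neq0 s.+1))).
rewrite Bclosed.
have h1 := Bclosed r.+1 s; have h2 := Bclosed r s.+1.
move: h1 h2; rewrite /= => h1 h2.
have -> : (B r.+1 s + 'X^(s.+1) * B r s.+1) * (Fr r * (1 - 'X^(r.+1)) * (Fr s * (1 - 'X^(s.+1))))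
   = (1 - 'X^(s.+1)) * (B r.+1 s * (Fr r * (1 - 'X^(r.+1)) * Fr s))
     + 'X^(s.+1) * (1 - 'X^(r.+1)) * (B r s.+1 * (Fr r * (Fr s * (1 - 'X^(s.+1))))) by ring.
rewrite h1 h2 !addnS /=.
have E : 'X^((r + s).+2) = 'X^(r.+1) * 'X^(s.+1) :> {poly rat} by rewrite -exprD addSn addnS.
rewrite E; ring.
Qed.

Definition Pp (n m : nat) : {poly rat} := \prod_(i < m) (1 - 'X^(n - i)).

Lemma Pp_Fr n m : (m <= n)%N -> Pp n m * Fr (n - m) = Fr n.
Proof.
elim: m => [|m IH] H; first by rewrite /Pp big_ord0 mul1r subn0.
rewrite /Pp big_ord_recr /= -/(Pp n m).
have E : (n - m = (n - m.+1).+1)%N by lia.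
rewrite -mulrA.
have -> : (1 - 'X^(n - m)) * Fr (n - m.+1) = Fr (n - m) by rewrite E /= mulrC.
by rewrite IH // ltnW.
Qed.

Lemma gaussB n m : (m <= n)%N -> gauss_poly n m = B m (n - m).
Proof.
move=> H.
have HP : Pp n m = B m (n - m) * Fr m.
  apply: (mulIf (Fr_neq0 (n - m))).
  by rewrite Pp_Fr // -mulrA Bclosed subnKC.
have Hm : Pp m m = Fr m by rewrite -[RHS](@Pp_Fr m m (leqnn m)) subnn /= mulr1.
rewrite /gauss_poly -/(Pp n m) -/(Pp m m) HP Hm mulpK //; exact: Fr_neq0.
Qed.

Definition Kt (n m : nat) : {poly rat} :=
  B m (n - m) + (if m is m'.+1 then 'X^n * B m' (n - m) else 0).

Lemma Bkey m s : (1 - 'X^(m.+1)) * B m.+1 s = (1 - 'X^((m + s).+1)) * B m s.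
Proof.
apply: (mulIf (mulf_neq0 (Fr_neq0 m) (Fr_neq0 s))).
have h1 := Bclosed m.+1 s; have h2 := Bclosed m s.
move: h1; rewrite /= => h1.
have -> : (1 - 'X^(m.+1)) * B m.+1 s * (Fr m * Fr s) = B m.+1 s * (Fr m * (1 - 'X^(m.+1)) * Fr s) by ring.
by rewrite h1 -mulrA h2 mulrC.
Qed.

Lemma onemX_neq0' n : (0 < n)%N -> (1 - 'X^n : {poly rat}) != 0.
Proof. by case: n => // n _; exact: onemX_neq0. Qed.

Lemma KtE n m : (1 <= n)%N -> (m <= n)%N -> qKaplansky n m = Kt n m.
Proof.
move=> Hn Hm; rewrite /qKaplansky gaussB // /Kt.
case: m Hm => [|m] Hm.
  by rewrite addn0 B0s mulr1 addr0 divpp // onemX_neq0'.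
have -> : ((1 - 'X^(n + m.+1)) * B m.+1 (n - m.+1)) =
          (1 - 'X^n) * (B m.+1 (n - m.+1) + 'X^n * B m (n - m.+1)).
  have key := Bkey m (n - m.+1).
  have En : ((m + (n - m.+1)).+1 = n)%N by lia.
  rewrite En in key.
  apply/eqP; rewrite -subr_eq0 exprD.
  set b1 := B m.+1 _ in key *; set b0 := B m _ in key *.
  have -> : (1 - 'X^n * 'X^(m.+1)) * b1 - (1 - 'X^n) * (b1 + 'X^n * b0)
          = 'X^n * ((1 - 'X^(m.+1)) * b1 - (1 - 'X^n) * b0) by ring.
  by rewrite key subrr mulr0.
by rewrite mulKp // onemX_neq0'.
Qed.

Definition nng (p : {poly rat}) := forall i, 0 <= p`_i.

Lemma nng0 : nng 0. Proof. by move=> i; rewrite coef0. Qed.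
Lemma nng1 : nng 1. Proof. by move=> i; rewrite coef1; case: (i == 0)%N. Qed.
Lemma nngD p q : nng p -> nng q -> nng (p + q).
Proof. by move=> hp hq i; rewrite coefD addr_ge0. Qed.
Lemma nngM p q : nng p -> nng q -> nng (p * q).
Proof.
move=> hp hq i; rewrite coefM; apply: sumr_ge0 => j _; exact: mulr_ge0.
Qed.
Lemma nngX n : nng 'X^n.
Proof. by move=> i; rewrite coefXn; case: (i == n). Qed.
Lemma nngXM n p : nng p -> nng ('X^n * p).
Proof. by move=> h; apply: nngM => //; exact: nngX. Qed.

Lemma nngB_aux N : forall r s, (r + s = N)%N -> nng (B r s).
Proof.
elim: N => [|N IH] [|r] [|s] //= H; rewrite ?B0s ?Br0; try exact: nng1.
rewrite Brec1; apply: nngD; first by apply: IH; lia.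
by apply: nngXM; apply: IH; lia.
Qed.
Lemma nngB r s : nng (B r s).
Proof. exact: (@nngB_aux (r + s)%N). Qed.

Lemma nng_decomp E a b e : E = a + 'X^e * b -> nng a -> nng b -> nng E.
Proof. by move=> -> ha hb; apply: nngD => //; apply: nngXM. Qed.

Definition Ef k s l t j := B k.+1 s * B l t.+1 - 'X^j * B k s.+1 * B l.+1 t.

Lemma Emain_aux N : forall k s l t j, (k + s + l + t < N)%N -> (k <= l)%N -> (t <= s)%N ->
  (j <= (l - k) + (s - t))%N -> nng (Ef k s l t j).
Proof.
elim: N => [|N IH] // k s l t j Hs Hkl Hts Hj.
have nBB : forall a b c d, nng (B a b * B c d) by move=> *; apply: nngM; apply: nngB.
case: (ltnP k l) => Hkl'.
- case: l Hkl Hkl' Hs Hj => [|l'] // Hkl Hkl' Hs Hj.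
  case: j Hj => [|j'] Hj.
  +
    case: t Hts Hs Hj => [|t'] Hts Hs Hj.
    * apply: (@nng_decomp _ (Ef k s l' 0 0) (B k.+1 s) l'.+1).
      -- rewrite /Ef (Brec1 l' 0) Br0 Br0 !expr0 !mul1r !mulr1; ring.
      -- apply: IH; lia.
      -- exact: nngB.
    * apply: (@nng_decomp _ (Ef k s l' t'.+1 0) (Ef k s l'.+1 t' 1) l'.+1).
      -- rewrite /Ef (Brec1 l' t'.+1) (Brec1 l'.+1 t') !exprS !expr0; ring.
      -- apply: IH; lia.
      -- apply: IH; lia.
  +
    case: t Hts Hs Hj => [|t'] Hts Hs Hj.
    * apply: (@nng_decomp _ (B k.+1 s) (Ef k s l' 0 j') 1).
      -- rewrite /Ef (Brec2 l' 0) !Br0 !exprS !expr0; ring.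
      -- exact: nngB.
      -- apply: IH; lia.
    * apply: (@nng_decomp _ (Ef k s l'.+1 t' j'.+1) (Ef k s l' t'.+1 j') t'.+2).
      -- rewrite /Ef (Brec2 l' t'.+1) (Brec2 l'.+1 t') !exprS; ring.
      -- apply: IH; lia.
      -- apply: IH; lia.
- have Ekl : k = l by apply/eqP; rewrite eqn_leq Hkl.
  subst l.
  case: (ltnP t s) => Hts'.
  + case: s Hts Hts' Hs Hj => [|s'] // Hts Hts' Hs Hj.
    case: j Hj => [|j'] Hj.
    *
      case: k Hkl Hkl' Hs Hj => [|k'] Hkl Hkl' Hs Hj.
      -- apply: (@nng_decomp _ (Ef 0 s' 0 t 0) (B 0 s'.+1 * B 0 t.+1) s'.+1).
         ++ rewrite /Ef (Brec2 0 s') !B0s !expr0; ring.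
         ++ apply: IH; lia.
         ++ exact: nBB.
      -- apply: (@nng_decomp _ (Ef k'.+1 s' k'.+1 t 0) (Ef k' s'.+1 k'.+1 t 1) s'.+1).
         ++ rewrite /Ef (Brec2 k'.+1 s') (Brec2 k' s'.+1) !exprS !expr0; ring.
         ++ apply: IH; lia.
         ++ apply: IH; lia.
    *
      case: k Hkl Hkl' Hs Hj => [|k'] Hkl Hkl' Hs Hj.
      -- apply: (@nng_decomp _ (B 0 s'.+1 * B 0 t.+1) (Ef 0 s' 0 t j') 1).
         ++ rewrite /Ef (Brec1 0 s') !B0s !exprS !expr0; ring.
         ++ exact: nBB.
         ++ apply: IH; lia.
      -- apply: (@nng_decomp _ (Ef k' s'.+1 k'.+1 t j'.+1) (Ef k'.+1 s' k'.+1 t j') k'.+2).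
         ++ rewrite /Ef (Brec1 k'.+1 s') (Brec1 k' s'.+1) !exprS; ring.
         ++ apply: IH; lia.
         ++ apply: IH; lia.
  + have Ets : t = s by apply/eqP; rewrite eqn_leq Hts.
    subst t.
    have -> : j = 0%N by lia.
    rewrite /Ef expr0 mul1r.
    have -> : B k.+1 s * B k s.+1 - B k s.+1 * B k.+1 s = 0 by ring.
    exact: nng0.
Qed.

Lemma Emain k s l t : (k <= l)%N -> (t <= s)%N -> nng (Ef k s l t 0).
Proof. by move=> *; apply: (@Emain_aux (k + s + l + t).+1). Qed.

Theorem corollary1p3 (n m l : nat) :
  (1 <= n)%N -> (1 <= m)%N -> (m <= l)%N -> (l <= n - 1)%N ->
  forall i : nat,
    0 <= (qKaplansky n m * qKaplansky n l
          - qKaplansky n (m - 1) * qKaplansky n (l + 1))`_i.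
Proof.
move=> Hn Hm Hml Hln i.
rewrite !KtE //; try lia.
case: m Hm Hml => [|m'] // _ Hml.
case: l Hml Hln => [|l'] // Hml Hln.
rewrite subn1 addn1 /= /Kt.
have E1 : (n - l'.+1 = (n - l'.+2).+1)%N by lia.
have E2 : (n - m' = (n - m'.+1).+1)%N by lia.
rewrite E1 E2.
set s := (n - m'.+1)%N; set t := (n - l'.+2)%N.
have Hts : (t <= s)%N by rewrite /s /t; lia.
have nBB : forall a b c d, nng (B a b * B c d) by move=> *; apply: nngM; apply: nngB.
move: i; apply: (@nng_decomp _ (Ef m' s l'.+1 t 0)
   ((Ef m' s l' t 0) + (if m' is m''.+1 then Ef m'' s l'.+1 t 0 + 'X^n * Ef m'' s l' t 0
       else B 0 s * B l'.+1 t.+1 + 'X^n * (B 0 s * B l' t.+1))) n).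
- case: m' Hml E2 s Hts => [|m''] Hml E2 s Hts; rewrite /Ef !expr0 !mul1r; ring.
- apply: Emain => //; lia.
- apply: nngD; first by apply: Emain => //; lia.
  case: m' Hml E2 s Hts => [|m''] Hml E2 s Hts.
  + by apply: nngD; [exact: nBB | apply: nngXM; exact: nBB].
  + by apply: nngD; [|apply: nngXM]; apply: Emain => //; lia.
Qed.
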